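(* Let $z_1,\dots,z_m\in\partial\mathbb{D}$ be distinct, $\mu=\sum_{j=1}^m\mu_j\delta_{z_j}$ with $\mu_j>0$, $\sum\mu_j=1$, and $G$ real-valued on $\{z_1,\dots,z_m\}$, numbered so that $G(z_1)\ge\cdots\ge G(z_m)$. Let $K_1,\dots,K_L$ be the $K$-groups $K_i=\{k_{i-1}+1,\dots,k_i\}$ ($k_0=0$, $k_L=m$), i.e. maximal blocks of consecutive indices on which $G(z_\cdot)$ is constant. Let $\mu_t=e^{tG}\mu/\int e^{tG}d\mu$ and fix $n\in K_r$. Then there exist $r_0>0$, $T\ge0$ and $C$ such that for all $t\ge T$ and each $j=1,\dots,k_{r-1}$, the disk $\{z:|z-z_j|<r_0\}$ contains exactly one zero $z_j^{(n)}(t)$ of $\Phi_n(z;\mu_t)$, and \[ |z_j^{(n)}(t)-z_j|\le C\exp\bigl(t[G(z_n)-G(z_j)]\bigr). \]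
   Context: $\Phi_n(z;\nu)$ denotes the monic orthogonal polynomial of degree $n$ for a positive measure $\nu$ on $\partial\mathbb{D}$ whose support has at least $n$ points (the unique monic degree-$n$ polynomial orthogonal in $L^2(\nu)$ to all lower-degree polynomials). *)

(* Defs.v *)
From HB Require Import structures.
From mathcomp Require Import all_boot all_order all_algebra.
From mathcomp Require Import complex.
From mathcomp Require Import classical_sets reals sequences exp.

Set Implicit Arguments.
Unset Strict Implicit.
Unset Printing Implicit Defensive.

Import Order.TTheory GRing.Theory Num.Theory.
Local Open Scope complex_scope.
Local Open Scope ring_scope.

Section OPUC.
Variable R : realType.
Local Notation C := (R[i]).

(* The discrete measure nu = sum_j w j * delta_(z j) on the points z : 'I_m -> C.
   L^2(nu) inner product  <f, g> = \int f * conj g dnu. *)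
Definition inner_disc (m : nat) (w : 'I_m -> R) (z : 'I_m -> C) (f g : {poly C}) : C :=
  \sum_(j < m) (w j)%:C * f.[z j] * (g.[z j])^*.

Definition is_monic_OP (m : nat) (w : 'I_m -> R) (z : 'I_m -> C) (n : nat)
    (p : {poly C}) : Prop :=
  [/\ p \is monic, size p = n.+1 &
      forall q : {poly C}, (size q <= n)%N -> inner_disc w z p q = 0].

Definition Phi (m : nat) (w : 'I_m -> R) (z : 'I_m -> C) (n : nat) : {poly C} :=
  xget 0 [set p | is_monic_OP w z n p].

Definition tilted (m : nat) (mu G : 'I_m -> R) (t : R) : 'I_m -> R :=
  fun j => mu j * expR (t * G j) / \sum_(k < m) mu k * expR (t * G k).

(* With 0-based indices (index j : 'I_m stands for z_{j+1}), and n the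
   1-based index in {1,..,m}: j lies in one of the K-groups K_1,..,K_{r-1}
   preceding the K-group K_r containing n, i.e. j+1 <= k_{r-1}.  Since the
   K-groups are the maximal blocks of consecutive indices on which G is
   constant, this means: j+1 < n and G is not constant on the block of
   indices from j+1 to n (1-based). *)
Definition in_earlier_Kgroup (m : nat) (G : 'I_m -> R) (n : nat) (j : 'I_m) : bool :=
  (j.+1 < n)%N &&
  ~~ [forall i : 'I_m, [forall i' : 'I_m,
        ((j <= i)%N && (i < n)%N && (j <= i')%N && (i' < n)%N) ==> (G i == G i')]].

End OPUC.

(* Main.v *)
Set Warnings "-notation-overridden,-ambiguous-paths,-deprecated".
Require Import Defs.
From HB Require Import structures.
From mathcomp Require Import all_boot all_order all_algebra.
From mathcomp Require Import complex.
From mathcomp Require Import classical_sets reals sequences exp.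
From mathcomp Require Import lra ring.

Set Implicit Arguments.
Unset Strict Implicit.
Unset Printing Implicit Defensive.
Import Order.TTheory GRing.Theory Num.Theory.
Local Open Scope complex_scope.
Local Open Scope ring_scope.

Section NC.
Variable R : realType.
Implicit Types x y : R[i].

Definition nc x : R := complex.Re `|x|.

Lemma nc_def x : `|x| = (nc x)%:C.
Proof. by rewrite /nc normc_def. Qed.

Lemma nc_ge0 x : 0 <= nc x.
Proof. by have := normr_ge0 x; rewrite nc_def ler0c. Qed.

Lemma ncM x y : nc (x * y) = nc x * nc y.
Proof. by apply: complexI; rewrite rmorphM /= -!nc_def normrM. Qed.

Lemma ncD x y : nc (x + y) <= nc x + nc y.
Proof. by rewrite -lecR rmorphD /= -!nc_def ler_normD. Qed.

Lemma ncN x : nc (- x) = nc x.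
Proof. by apply: complexI; rewrite -!nc_def normrN. Qed.

Lemma ncB x y : nc (x - y) = nc (y - x).
Proof. by rewrite -ncN opprB. Qed.

Lemma nc_eq0 x : (nc x == 0) = (x == 0).
Proof. by rewrite -[x == 0]normr_eq0 nc_def -(rmorph0 (real_complex R)) (inj_eq (@complexI R)). Qed.

Lemma nc_sqr x : ((nc x) ^+ 2)%:C = x * x^*.
Proof. by rewrite rmorphXn /= -nc_def sqr_normc. Qed.

Lemma nc_Re2 x : (nc x) ^+ 2 = complex.Re x ^+ 2 + complex.Im x ^+ 2.
Proof. by apply: complexI; rewrite add_Re2_Im2 nc_def rmorphXn. Qed.

Lemma nc_conj x : nc (x^*) = nc x.
Proof. by apply: complexI; rewrite -!nc_def normcJ. Qed.

Lemma nc_real (a : R) : nc a%:C = `|a|.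
Proof. by rewrite /nc normc_def /= expr0n /= addr0 sqrtr_sqr. Qed.

Lemma ncC1 : nc 1 = 1.
Proof. by apply: complexI; rewrite -nc_def normr1. Qed.

Lemma nc_prod (I : Type) (r : seq I) (P : pred I) (F : I -> R[i]) :
  nc (\prod_(i <- r | P i) F i) = \prod_(i <- r | P i) nc (F i).
Proof.
elim/big_rec2: _ => [|i a b _ <-]; first exact: ncC1.
by rewrite ncM.
Qed.

Lemma nc_sum (I : Type) (r : seq I) (P : pred I) (F : I -> R[i]) :
  nc (\sum_(i <- r | P i) F i) <= \sum_(i <- r | P i) nc (F i).
Proof.
elim/big_rec2: _ => [|i a b _ Hb]; first by rewrite -(rmorph0 (real_complex R)) nc_real normr0.
by apply: (le_trans (ncD _ _)); rewrite lerD2l.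
Qed.

Lemma conjCR (a : R) : (a%:C)^* = a%:C.
Proof. by apply/conj_Creal/complex_realP; exists a. Qed.

Lemma Re_realM (a : R) x : complex.Re (a%:C * x) = a * complex.Re x.
Proof. by case: x => u v /=; rewrite mul0r subr0. Qed.

Lemma Re_le_nc x : complex.Re x <= nc x.
Proof. by rewrite -lecR -nc_def; apply: le_trans (normc_ge_Re x); rewrite lecR ler_norm. Qed.

Lemma nc_conjc x : nc (conjc x) = nc x.
Proof. by apply: complexI; rewrite -!nc_def normcJ. Qed.

Lemma nc_tri x y u : nc (x - y) <= nc (x - u) + nc (u - y).
Proof. by apply: le_trans (ncD _ _); rewrite addrA subrK. Qed.

Lemma ReD x y : complex.Re (x + y) = complex.Re x + complex.Re y.
Proof. by case: x => ? ?; case: y. Qed.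

Lemma ReN x : complex.Re (- x) = - complex.Re x.
Proof. by case: x. Qed.

Lemma Re_sum (I : Type) (r : seq I) (P : pred I) (F : I -> R[i]) :
  complex.Re (\sum_(i <- r | P i) F i) = \sum_(i <- r | P i) complex.Re (F i).
Proof. by elim/big_rec2: _ => // i a b _ <-; rewrite ReD. Qed.

Lemma rho_circle (a b : R[i]) : nc a = 1 -> nc b = 1 ->
  complex.Re (conjc b * (a - b)) = - (nc (a - b))^+2 / 2.
Proof.
move=> Ha Hb; rewrite nc_Re2.
have := nc_Re2 a; have := nc_Re2 b; rewrite Ha Hb expr1n; clear Ha Hb.
case: a => a1 a2; case: b => b1 b2 /= H1 H2.
nra.
Qed.

Lemma rho_le b x : nc b = 1 -> complex.Re (conjc b * x) <= nc x.
Proof. by move=> Hb; apply: le_trans (Re_le_nc _) _; rewrite ncM nc_conjc Hb mul1r. Qed.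

Lemma rho_ge b x : nc b = 1 -> - nc x <= complex.Re (conjc b * x).
Proof.
move=> Hb; rewrite lerNl -ReN -mulrN -(ncN x); exact: rho_le.
Qed.

Lemma nc_le2 a b : nc a = 1 -> nc b = 1 -> nc (a - b) <= 2.
Proof.
move=> Ha Hb; apply: le_trans (ncD _ _) _; rewrite ncN Ha Hb; lra.
Qed.

End NC.

Section IP.
Variable R : realType.
Variable m : nat.
Variable w : 'I_m -> R.
Variable z : 'I_m -> R[i].
Hypothesis zinj : injective z.
Hypothesis wpos : forall j, 0 < w j.
Local Notation ip := (inner_disc w z).
Local Notation C := (R[i]).
Implicit Types p q f g h : {poly C}.

Definition nrm p := \sum_(j < m) w j * nc p.[z j] ^+ 2.

Lemma ip_self p : ip p p = (nrm p)%:C.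
Proof.
rewrite /inner_disc /nrm rmorph_sum; apply: eq_bigr => j _.
by rewrite rmorphM /= nc_sqr mulrA.
Qed.

Lemma ipC f g : ip g f = (ip f g)^*.
Proof.
rewrite /inner_disc rmorph_sum; apply: eq_bigr => j _.
by rewrite !rmorphM /= conjCR conjCK mulrAC.
Qed.

Lemma ipDr f g h : ip f (g + h) = ip f g + ip f h.
Proof.
rewrite /inner_disc -big_split; apply: eq_bigr => j _ /=.
by rewrite hornerD rmorphD mulrDr.
Qed.

Lemma ipZr f a g : ip f (a *: g) = a^* * ip f g.
Proof.
rewrite /inner_disc mulr_sumr; apply: eq_bigr => j _ /=.
by rewrite hornerZ rmorphM mulrCA.
Qed.

Lemma ip0r f : ip f 0 = 0.
Proof. by rewrite /inner_disc big1 // => j _; rewrite horner0 rmorph0 mulr0. Qed.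

Lemma ip0l f : ip 0 f = 0.
Proof. by rewrite /inner_disc big1 // => j _; rewrite horner0 mulr0 mul0r. Qed.

Lemma ipDl f g h : ip (f + g) h = ip f h + ip g h.
Proof.
rewrite /inner_disc -big_split; apply: eq_bigr => j _ /=.
by rewrite hornerD mulrDr mulrDl.
Qed.

Lemma ipZl a f g : ip (a *: f) g = a * ip f g.
Proof.
rewrite /inner_disc mulr_sumr; apply: eq_bigr => j _ /=.
by rewrite hornerZ !mulrA [_ * a]mulrC.
Qed.

Lemma ipNl f g : ip (- f) g = - ip f g.
Proof. by rewrite -scaleN1r ipZl mulN1r. Qed.

Lemma ipBl f g h : ip (f - g) h = ip f h - ip g h.
Proof. by rewrite ipDl ipNl. Qed.

Lemma ipNr f g : ip f (- g) = - ip f g.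
Proof. by rewrite -scaleN1r ipZr rmorphN rmorph1 mulN1r. Qed.

Lemma ipBr f g h : ip f (g - h) = ip f g - ip f h.
Proof. by rewrite ipDr ipNr. Qed.

Lemma ip_suml (I : Type) (r : seq I) (P : pred I) (F : I -> {poly C}) g :
  ip (\sum_(i <- r | P i) F i) g = \sum_(i <- r | P i) ip (F i) g.
Proof.
elim/big_rec2: _ => [|i a b _ <-]; first exact: ip0l.
by rewrite ipDl.
Qed.

Lemma nrm_ge0 p : 0 <= nrm p.
Proof. apply: sumr_ge0 => j _; apply: mulr_ge0; [exact: ltW | exact: sqr_ge0]. Qed.

Lemma nrm_eq0 p : nrm p = 0 -> forall j, p.[z j] = 0.
Proof.
move=> H j.
have := psumr_eq0P (fun i _ => mulr_ge0 (ltW (wpos i)) (sqr_ge0 (nc p.[z i]))) H (i := j) isT.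
move/eqP.
rewrite mulf_eq0 (gt_eqF (wpos j)) /= expf_eq0 /= nc_eq0.
by move/eqP.
Qed.

Lemma vanish (P : {pred 'I_m}) p :
  (forall i, i \in P -> p.[z i] = 0) -> (size p <= #|P|)%N -> p = 0.
Proof.
move=> Hv Hs; apply/eqP; apply: contraTT Hs => Hp; rewrite -ltnNge.
rewrite -(size_image z P); apply: max_poly_roots Hp _ _.
  apply/allP => x /mapP [i Pi ->]; by rewrite /root Hv // -mem_enum.
by rewrite map_inj_uniq // enum_uniq.
Qed.

Lemma size_le_coef0 p s : (size p <= s.+1)%N -> p`_s = 0 -> (size p <= s)%N.
Proof.
move=> H1 H2; apply/leq_sizeP => j; rewrite leq_eqVlt => /orP [/eqP <- // | Hj].
by move/leq_sizeP: H1; apply.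
Qed.

Lemma monic_coef p n : p \is monic -> size p = n.+1 -> p`_n = 1.
Proof. by move/monicP; rewrite lead_coefE => <- ->. Qed.

Local Notation OP := (is_monic_OP w z).
Local Notation Ph := (Phi w z).

Lemma OP_orth_span n p : (forall l, (l < n)%N -> OP l (Ph l)) ->
  (forall l, (l < n)%N -> ip p (Ph l) = 0) ->
  forall q, (size q <= n)%N -> ip p q = 0.
Proof.
elim: n => [|n IH] HOP Hort q Hq.
  by move: Hq; rewrite size_poly_leq0 => /eqP ->; apply: ip0r.
have [Hm Hs _] := HOP n (ltnSn n).
set q' := q - q`_n *: Ph n.
have Hq' : (size q' <= n)%N.
  apply: size_le_coef0; last by rewrite coefB coefZ (monic_coef Hm Hs) mulr1 subrr.
  apply: leq_trans (size_polyD _ _) _; rewrite size_polyN geq_max Hq /=.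
  by apply: leq_trans (size_scale_leq _ _) _; rewrite Hs.
have -> : q = q' + q`_n *: Ph n by rewrite subrK.
rewrite ipDr ipZr (Hort n) // mulr0 addr0.
apply: IH Hq' => [l Hl|l Hl]; [apply: HOP | apply: Hort]; exact: ltnW.
Qed.

Lemma nrm_pos p : p != 0 -> (size p <= m)%N -> 0 < nrm p.
Proof.
move=> Hp Hs; rewrite lt_def nrm_ge0 andbT; apply/eqP => /nrm_eq0 H.
move/eqP: Hp; apply; apply: (@vanish predT) => [i _|]; first exact: H.
by rewrite cardT size_enum_ord.
Qed.

Lemma OP_exists n : (n <= m)%N -> OP n (Ph n).
Proof.
elim/ltn_ind: n => n IH Hnm.
rewrite /Phi; apply: xgetPex.
case: n IH Hnm => [|n] IH Hnm.
  exists 1; split; first exact: monic1.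
    by rewrite size_poly1.
  by move=> q; rewrite size_poly_leq0 => /eqP ->; apply: ip0r.
have HOP : forall l, (l < n.+1)%N -> OP l (Ph l).
  by move=> l Hl; apply: IH => //; apply: leq_trans Hnm; apply: ltnW.
have Hnz : forall l, (l < n.+1)%N -> ip (Ph l) (Ph l) != 0.
  move=> l Hl; have [Hm Hs _] := HOP l Hl.
  rewrite ip_self -(rmorph0 (real_complex R)) (inj_eq (@complexI R)).
  rewrite gt_eqF // nrm_pos ?monic_neq0 // Hs.
  by apply: leq_trans Hnm.
have Horth : forall l l', (l < n.+1)%N -> (l' < n.+1)%N -> l != l' ->
    ip (Ph l') (Ph l) = 0.
  move=> l l' Hl Hl' Hne.
  case: (ltngtP l l') Hne => // H _.
    have [_ Hs Ho] := HOP l' Hl'; apply: Ho; have [_ -> _] := HOP l Hl; done.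
  have [_ Hs Ho] := HOP l Hl; rewrite ipC; apply/eqP; rewrite conjC_eq0; apply/eqP.
  by apply: Ho; have [_ -> _] := HOP l' Hl'.
pose c (l : 'I_n.+1) := ip 'X^(n.+1) (Ph l) / ip (Ph l) (Ph l).
pose S := \sum_(l < n.+1) c l *: Ph l.
have HS : (size S <= n.+1)%N.
  rewrite /S; apply: (big_ind (fun x : {poly C} => (size x <= n.+1)%N)).
  - by rewrite size_poly0.
  - move=> x y Hx Hy; apply: leq_trans (size_polyD _ _) _; by rewrite geq_max Hx Hy.
  move=> l _; apply: leq_trans (size_scale_leq _ _) _.
  by have [_ -> _] := HOP l (ltn_ord l).
exists ('X^(n.+1) - S).
have HsS : (size (- S) < size ('X^(n.+1) : {poly C}))%N by rewrite size_polyN size_polyXn.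
split.
- by rewrite monicE lead_coefDl // lead_coefXn.
- by rewrite size_polyDl // size_polyXn.
apply: OP_orth_span => // l Hl.
rewrite ipBl /S ip_suml (bigD1 (Ordinal Hl)) //= big1 ?addr0.
  by rewrite ipZl /c divfK ?subrr // (Hnz l Hl).
move=> l' Hl'; rewrite ipZl (Horth l l') ?mulr0 //.
by apply: contra Hl' => /eqP H; apply/eqP/val_inj.
Qed.

Lemma OP_min n P p : OP n P -> p \is monic -> size p = n.+1 -> nrm P <= nrm p.
Proof.
move=> [HPm HPs HPo] Hm Hs.
set d := p - P.
have Hd : (size d <= n)%N.
  apply: size_le_coef0; last by rewrite coefB (monic_coef Hm Hs) (monic_coef HPm HPs) subrr.
  apply: leq_trans (size_polyD _ _) _; by rewrite size_polyN geq_max Hs HPs !leqnn.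
have Hp : p = P + d by rewrite /d addrC subrK.
clearbody d.
have : (nrm p)%:C = (nrm P + nrm d)%:C.
  rewrite -ip_self Hp ipDl !ipDr (HPo d Hd) [ip d P]ipC (HPo d Hd) rmorph0 addr0 add0r.
  by rewrite rmorphD /= -!ip_self.
move/complexI ->; by rewrite lerDl nrm_ge0.
Qed.

Lemma two_roots n P j (d : R) (c1 c2 : C) h :
  is_monic_OP w z n P -> (n <= m)%N -> (forall i, nc (z i) = 1) ->
  0 < d -> d <= 1 -> (forall i, i != j -> d <= nc (z i - z j)) ->
  nc (c1 - z j) < d ^+ 4 / 256%:R -> nc (c2 - z j) < d ^+ 4 / 256%:R ->
  P = ('X - c1%:P) * ('X - c2%:P) * h -> False.
Proof.
move=> [Hm Hs Ho] Hnm Hu Hd0 Hd1 Hdist H1 H2 HP.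
have Hh : h != 0.
  apply/eqP => Hh0; move: Hm; rewrite HP Hh0 mulr0 monicE lead_coef0 eq_sym oner_eq0.
  done.
have Hx : ('X - c1%:P) * ('X - c2%:P) != 0 by rewrite mulf_neq0 // polyXsubC_eq0.
have Hsz : ((size h).+2 = n.+1)%N.
  move: Hs; rewrite HP size_mul // size_mul ?polyXsubC_eq0 // !size_XsubC.
  by case: (size h) => [|k] /=.
have Hh_le : (size h <= n)%N by move: Hsz => [<-]; exact: leqnSn.
have Hbh_le : (size (('X - c2%:P) * h)%R <= n)%N.
  by rewrite size_mul ?polyXsubC_eq0 // size_XsubC; move: Hsz => [<-].
have E0 := Ho h Hh_le.
have E2 := Ho _ Hbh_le.
subst P.
pose u i := w i * nc h.[z i] ^+ 2.
have Hu0 : forall i, 0 <= u i.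
  by move=> i; apply: mulr_ge0; [exact: ltW | exact: sqr_ge0].
have E0' : \sum_i (u i)%:C * ((z i - c1) * (z i - c2)) = 0.
  rewrite -[X in _ = X]E0 /inner_disc; apply: eq_bigr => i _.
  rewrite !hornerM !hornerXsubC /u rmorphM /= nc_sqr; ring.
have E2' : \sum_i (u i * nc (z i - c2) ^+ 2)%:C * (z i - c1) = 0.
  rewrite -[X in _ = X]E2 /inner_disc; apply: eq_bigr => i _.
  have Hsq (x : C) : (nc x)%:C * (nc x)%:C = x * x^* by rewrite -rmorphM; exact: nc_sqr.
  rewrite !hornerM !hornerXsubC /u !rmorphM /= !Hsq; ring.
set e1 := nc (c1 - z j).
set e2 := nc (c2 - z j).
have e1ge0 : 0 <= e1 by exact: nc_ge0.
have e2ge0 : 0 <= e2 by exact: nc_ge0.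
have Hd2 : d ^+ 2 <= d by rewrite expr2; nra.
have Hd4 : d ^+ 4 <= d ^+ 2.
  have -> : d ^+ 4 = d ^+ 2 * d ^+ 2 by rewrite -exprD.
  have : 0 <= d ^+ 2 by exact: sqr_ge0.
  nra.
have Hd4p : 0 < d ^+ 4 by rewrite exprn_gt0.
have Hd2p : 0 < d ^+ 2 by rewrite exprn_gt0.
have R2 : \sum_i (u i * nc (z i - c2) ^+ 2) * complex.Re (conjc (z j) * (z i - c1)) = 0.
  have := congr1 (fun x => complex.Re (conjc (z j) * x)) E2'.
  rewrite /= mulr0 mulr_sumr Re_sum => H.
  rewrite -[RHS]/(complex.Re 0) -H; apply: eq_bigr => i _.
  by rewrite [in RHS]mulrCA Re_realM.
rewrite (bigD1 j) //= in R2.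
rewrite (bigD1 j) //= in E0'.
set U := \sum_(i | i != j) u i.
have HU0 : 0 <= U by apply: sumr_ge0 => i _.
have HA : d ^+ 4 / 16%:R * U <= u j * e1 * e2 ^+ 2.
  have Hj : u j * nc (z j - c2) ^+ 2 * complex.Re (conjc (z j) * (z j - c1))
            <= u j * e1 * e2 ^+ 2.
    rewrite /e2 -ncB mulrAC; apply: ler_wpM2r; first exact: sqr_ge0.
    apply: ler_wpM2l; first exact: Hu0.
    by rewrite /e1 ncB; apply: rho_le.
  have Hi : \sum_(i | i != j) (u i * nc (z i - c2) ^+ 2) *
              complex.Re (conjc (z j) * (z i - c1)) <= - (d ^+ 4 / 16%:R * U).
    rewrite /U mulr_sumr -sumrN; apply: ler_sum => i Hij.
    have Hdi := Hdist i Hij.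
    have HB : d ^+ 2 / 4%:R <= nc (z i - c2) ^+ 2.
      have : d / 2%:R <= nc (z i - c2).
        have := nc_tri (z i) (z j) c2; rewrite -/e2 => Ht.
        have : e2 <= d / 2%:R by apply: le_trans (ltW H2) _; lra.
        lra.
      move=> Hq; have Hq0 : 0 <= d / 2%:R by lra.
      have := ler_pXn2r (n := 2) isT Hq0 (le_trans Hq0 Hq).
      rewrite Hq expr_div_n; lra.
    have Hrho : complex.Re (conjc (z j) * (z i - c1)) <= - (d ^+ 2 / 4%:R).
      have -> : z i - c1 = (z i - z j) + (z j - c1) by rewrite addrA subrK.
      rewrite mulrDr ReD rho_circle // .
      have : complex.Re (conjc (z j) * (z j - c1)) <= e1 by rewrite /e1 ncB rho_le.
      have : d ^+ 2 <= nc (z i - z j) ^+ 2.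
        by rewrite ler_pXn2r // ?nnegrE ?nc_ge0 // ltW.
      have : e1 <= d ^+ 2 / 4%:R by apply: le_trans (ltW H1) _; lra.
      lra.
    have E4 : d ^+ 4 = d ^+ 2 * d ^+ 2 by rewrite -exprD.
    rewrite E4; move: HB Hrho (Hu0 i) Hd2p.
    set B := nc (z i - c2) ^+ 2; set rr := complex.Re _; set d2 := d ^+ 2; set uu := u i.
    move=> HB Hrho Hu0i Hd2p'.
    have HBr : B * rr <= - (d2 / 4%:R * (d2 / 4%:R)) by nra.
    nra.
  rewrite addrC in R2.
  have := lerD Hi Hj; rewrite R2; lra.
have HB : u j * e1 * e2 <= 9%:R * U.
  move/eqP: E0'; rewrite addr_eq0 => /eqP /(congr1 (@nc R)).
  rewrite ncN !ncM nc_real ger0_norm // (ncB (z j)) (ncB (z j)) -/e1 -/e2 mulrA => ->.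
  apply: le_trans (nc_sum _ _ _) _; rewrite /U mulr_sumr; apply: ler_sum => i Hij.
  rewrite !ncM nc_real ger0_norm //.
  have Ha : nc (z i - c1) <= 3%:R.
    have := nc_tri (z i) c1 (z j); rewrite (ncB (z j) c1) -/e1 => Ht.
    have := nc_le2 (Hu i) (Hu j); have : e1 <= 1 by apply: le_trans (ltW H1) _; lra.
    lra.
  have Hb : nc (z i - c2) <= 3%:R.
    have := nc_tri (z i) c2 (z j); rewrite (ncB (z j) c2) -/e2 => Ht.
    have := nc_le2 (Hu i) (Hu j); have : e2 <= 1 by apply: le_trans (ltW H2) _; lra.
    lra.
  have Hab : nc (z i - c1) * nc (z i - c2) <= 9%:R.
    have := nc_ge0 (z i - c1); have := nc_ge0 (z i - c2); nra.
  rewrite [9%:R * _]mulrC; apply: ler_wpM2l; [exact: Hu0 | exact: Hab].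
have HU : U <= 0.
  have : u j * e1 * e2 ^+ 2 <= 9%:R * U * (d ^+ 4 / 256%:R).
    rewrite expr2 mulrA; apply: le_trans (ler_wpM2r e2ge0 HB) _.
    by apply: ler_wpM2l; [rewrite mulr_ge0 | apply: ltW].
  move=> H; have := le_trans HA H; nra.
have HU' : U = 0 by apply/eqP; rewrite eq_le HU HU0.
have Hv : forall i, i \in predC1 j -> h.[z i] = 0.
  move=> i Hij; have := psumr_eq0P (fun i _ => Hu0 i) HU' Hij.
  rewrite /u => /eqP; rewrite mulf_eq0 (gt_eqF (wpos i)) /= expf_eq0 /= nc_eq0.
  by move/eqP.
move/eqP: Hh; apply; apply: (vanish Hv).
rewrite cardC1 card_ord.
have Hlt : (size h < m)%N by apply: leq_trans Hnm; move: Hsz => [<-].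
by rewrite -ltnS prednK //; exact: leq_ltn_trans (leq0n _) Hlt.
Qed.

End IP.

Section Bound.
Variable R : realType.
Local Notation C := (R[i]).

Lemma prod_bound (s : seq C) (y : C) N :
  (forall x, x \in s -> nc x = 1) -> nc y = 1 -> (size s <= N)%N ->
  nc (\prod_(x <- s) ('X - x%:P)).[y] <= 2%:R ^+ N.
Proof.
move=> Hs Hy HN; rewrite horner_prod nc_prod.
apply: le_trans (ler_weXn2l _ HN); last by lra.
elim: s Hs {HN} => [|x s IH] Hs; first by rewrite big_nil expr0.
rewrite big_cons exprS /=; apply: ler_pM.
- exact: nc_ge0.
- by apply: prodr_ge0 => i _; exact: nc_ge0.
- by rewrite hornerXsubC; apply: nc_le2 => //; apply: Hs; rewrite inE eqxx.
by apply: IH => x' Hx'; apply: Hs; rewrite inE Hx' orbT.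
Qed.

Lemma amgm (W a b c : R) : 0 <= W -> 0 <= a -> 0 <= b -> b <= c ->
  W * a * b <= W * a ^+ 2 / 2%:R + W * c ^+ 2 / 2%:R.
Proof.
move=> HW Ha Hb Hbc.
have H : a * b <= a ^+ 2 / 2%:R + c ^+ 2 / 2%:R.
  have Hcb : 0 <= c - b by rewrite subr_ge0.
  have := mulr_ge0 Ha Hcb; have := sqr_ge0 (a - c); nra.
have := ler_wpM2l HW H; rewrite mulrDr !mulrA; lra.
Qed.

Variable m : nat.
Variable w : 'I_m -> R.
Variable z : 'I_m -> R[i].
Hypothesis zinj : injective z.
Hypothesis wpos : forall j, 0 < w j.
Hypothesis zu : forall i, nc (z i) = 1.
Local Notation ip := (inner_disc w z).

Variable k : nat.
Hypothesis Hk : (k < m)%N.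

Definition sk : seq C := [seq z (widen_ord (ltnW Hk) i) | i : 'I_k].

Lemma sk_size : size sk = k.
Proof. by rewrite /sk size_map size_enum_ord. Qed.

Lemma sk_mem i : (z i \in sk) = (i < k)%N.
Proof.
apply/idP/idP.
  by case/mapP => i' _ /zinj ->; rewrite /= ltn_ord.
move=> Hik; apply/mapP; exists (Ordinal Hik); first by rewrite mem_enum.
by congr z; apply: val_inj.
Qed.

Lemma sk_uniq : uniq sk.
Proof.
rewrite /sk map_inj_uniq ?enum_uniq // => a b /zinj /(congr1 val) /= H.
exact: val_inj.
Qed.

Lemma sk_unit x : x \in sk -> nc x = 1.
Proof. by case/mapP => i _ ->. Qed.

Definition qk (j : 'I_m) : {poly C} := \prod_(x <- rem (z j) sk) ('X - x%:P).

Lemma qk_root (j i : 'I_m) : ((qk j).[z i] == 0) = ((i < k)%N && (i != j)).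
Proof.
apply/idP/idP.
  rewrite -/(root _ _) root_prod_XsubC (mem_rem_uniq _ sk_uniq) inE.
  case/andP => Hne; rewrite sk_mem => ->; apply: contra Hne => /eqP ->; done.
case/andP => Hi Hne; rewrite -/(root _ _) root_prod_XsubC.
rewrite (mem_rem_uniq _ sk_uniq) inE sk_mem Hi andbT.
by apply: contra Hne => /eqP /zinj ->.
Qed.

Lemma phi_bound P (j : 'I_m) : is_monic_OP w z k.+1 P -> (j < k)%N ->
  w j * nc P.[z j] * nc (qk j).[z j] <=
  (2%:R ^+ k) ^+ 2 * \sum_(i : 'I_m | (k <= i)%N) w i.
Proof.
move=> HP Hj.
set B := (2%:R ^+ k) ^+ 2 : R.
have HB0 : 0 <= B by exact: sqr_ge0.
set S := \sum_(i : 'I_m | (k <= i)%N) w i.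
have HS : 0 <= S by apply: sumr_ge0 => i _; exact: ltW.
pose p := (\prod_(x <- sk) ('X - x%:P)) * 'X.
have pm : p \is monic by rewrite /p monicMr ?monicX // monic_prod_XsubC.
have ps : size p = k.+2.
  by rewrite /p size_mulX ?monic_neq0 ?monic_prod_XsubC // size_prod_XsubC sk_size.
have Hnp : nrm w z p <= B * S.
  rewrite /nrm /S [X in _ <= _ * X]big_mkcond mulr_sumr; apply: ler_sum => i _.
  case: ifP => Hki.
    rewrite mulrC; apply: ler_wpM2r; first exact: ltW.
    have Hb : nc p.[z i] <= 2%:R ^+ k.
      rewrite /p hornerM hornerX ncM zu mulr1.
      by apply: prod_bound => //; [exact: sk_unit | rewrite sk_size].
    by rewrite /B ler_pXn2r // ?nnegrE ?nc_ge0 ?exprn_ge0.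
  have : p.[z i] = 0.
    rewrite /p hornerM; apply/eqP; rewrite mulf_eq0 -/(root _ _) root_prod_XsubC.
    by rewrite sk_mem ltnNge Hki.
  by move=> ->; rewrite (_ : nc 0 = 0) ?expr0n ?mulr0 //; apply/eqP; rewrite nc_eq0.
have HPmin := OP_min wpos HP pm ps.
have Hq : (size (qk j) <= k.+1)%N.
  rewrite /qk size_prod_XsubC size_rem ?sk_size; last by rewrite sk_mem.
  by case: k Hk Hj => [|k'] //= _ _; rewrite ltnS leqnSn.
have [_ _ Ho] := HP.
have E := Ho _ Hq.
rewrite /inner_disc (bigD1 j) //= in E.
move/eqP: E; rewrite addr_eq0 => /eqP /(congr1 (@nc R)).
rewrite ncN !ncM nc_real ger0_norm ?(ltW (wpos j)) // nc_conj => ->.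
apply: le_trans (nc_sum _ _ _) _.
pose g i := w i * nc P.[z i] ^+ 2 / 2%:R + (if (k <= i)%N then w i * B else 0) / 2%:R.
have Hg0 : forall i, 0 <= g i.
  move=> i; rewrite /g; apply: addr_ge0; apply: divr_ge0 => //.
    by apply: mulr_ge0; [exact: ltW | exact: sqr_ge0].
  by case: ifP => // _; apply: mulr_ge0 => //; exact: ltW.
apply: (@le_trans _ _ (\sum_(i | i != j) g i)).
  apply: ler_sum => i Hij; rewrite !ncM nc_real ger0_norm ?(ltW (wpos i)) // nc_conj /g.
  case: ifP => Hki.
    have Hqb : nc (qk j).[z i] <= 2%:R ^+ k.
      rewrite /qk; apply: prod_bound => //.
        by move=> x /mem_rem; exact: sk_unit.
      by rewrite size_rem ?sk_size ?leq_pred // sk_mem.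
    rewrite /B; apply: amgm => //; [exact: ltW (wpos i) | exact: nc_ge0 | exact: nc_ge0].
  have -> : (qk j).[z i] = 0.
    by apply/eqP; rewrite qk_root Hij andbT ltnNge Hki.
  rewrite (_ : nc 0 = 0) ?mulr0 ?add0r; last by apply/eqP; rewrite nc_eq0.
  rewrite mul0r addr0; apply: divr_ge0 => //.
  by apply: mulr_ge0; [exact: ltW | exact: sqr_ge0].
apply: (@le_trans _ _ (\sum_i g i)).
  by rewrite [X in _ <= X](bigD1 j) //= lerDr.
rewrite /g big_split /= -!mulr_suml.
have : \sum_(i : 'I_m) (if (k <= i)%N then w i * B else 0) = B * S.
  rewrite /S [in RHS]big_mkcond mulr_sumr; apply: eq_bigr => i _.
  by case: ifP => _; rewrite ?mulr0 // mulrC.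
move=> ->; rewrite -/(nrm w z P).
have := OP_min wpos HP pm ps; lra.
Qed.

End Bound.

Section Loc.
Variable R : realType.
Local Notation C := (R[i]).

Lemma prod_lb (s : seq C) (y : C) (r0 : R) : 0 <= r0 ->
  (forall x, x \in s -> r0 <= nc (x - y)) ->
  r0 ^+ size s <= nc (\prod_(x <- s) ('X - x%:P)).[y].
Proof.
move=> Hr0; rewrite horner_prod nc_prod.
elim: s => [|x s IH] Hs; first by rewrite big_nil expr0.
rewrite big_cons /= exprS; apply: ler_pM => //.
- exact: exprn_ge0.
- by rewrite hornerXsubC ncB; apply: Hs; rewrite inE eqxx.
by apply: IH => x' Hx'; apply: Hs; rewrite inE Hx' orbT.
Qed.

Variable m : nat.
Variable w : 'I_m -> R.
Variable z : 'I_m -> R[i].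
Hypothesis zinj : injective z.
Hypothesis wpos : forall j, 0 < w j.
Hypothesis zu : forall i, nc (z i) = 1.

Lemma root_local n P (j : 'I_m) (d : R) :
  is_monic_OP w z n.+1 P -> (n.+1 <= m)%N ->
  0 < d -> d <= 1 -> (forall i, i != j -> d <= nc (z i - z j)) ->
  nc P.[z j] < (d ^+ 4 / 256%:R) ^+ n.+1 ->
  exists zeta : C,
    [/\ nc (zeta - z j) < d ^+ 4 / 256%:R, root P zeta, mup zeta P = 1%N,
        (forall v : C, nc (v - z j) < d ^+ 4 / 256%:R -> root P v -> v = zeta) &
        nc (zeta - z j) * (d ^+ 4 / 256%:R) ^+ n <= nc P.[z j]].
Proof.
move=> HP Hnm Hd0 Hd1 Hdist Hsmall.
set r0 := d ^+ 4 / 256%:R.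
have Hr0 : 0 < r0 by rewrite /r0 divr_gt0 // exprn_gt0.
have [Hm Hs Ho] := HP.
have [r Hr] := closed_field_poly_normal P.
rewrite (monicP Hm) scale1r in Hr.
have Hsr : size r = n.+1.
  by move: Hs; rewrite Hr size_prod_XsubC => [[]].
have No2 : forall c1 c2 (s : seq C), P = ('X - c1%:P) * ('X - c2%:P) * \prod_(x <- s) ('X - x%:P) ->
    nc (c1 - z j) < r0 -> nc (c2 - z j) < r0 -> False.
  move=> c1 c2 s HPs H1 H2.
  exact: (two_roots zinj wpos HP Hnm zu Hd0 Hd1 Hdist H1 H2 HPs).
have [/hasP [zeta Hzr Hzeta] | /hasPn Hall] := boolP (has (fun x => nc (x - z j) < r0) r); last first.
  exfalso; move: Hsmall; apply/negP; rewrite -leNgt -Hsr Hr.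
  apply: prod_lb; first exact: ltW.
  by move=> x Hx; rewrite leNgt; apply: Hall.
have Hfact : P = ('X - zeta%:P) * \prod_(x <- rem zeta r) ('X - x%:P).
  by rewrite Hr (big_rem _ Hzr).
have Hrest : forall x, x \in rem zeta r -> r0 <= nc (x - z j).
  move=> x Hx; rewrite leNgt; apply/negP => Hlt.
  apply: (No2 zeta x (rem x (rem zeta r))) => //.
  by rewrite Hfact (big_rem _ Hx) mulrA.
exists zeta; split => //.
- by rewrite Hr root_prod_XsubC.
- rewrite Hr mu_prod_XsubC.
  have := perm_to_rem Hzr => /permP /(_ (pred1 zeta)) ->.
  rewrite /= eqxx add1n; congr S; apply/count_memPn; apply/negP => Hin.
  by have := Hrest _ Hin; rewrite leNgt Hzeta.
- move=> v Hv; rewrite Hr root_prod_XsubC => Hvr.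
  apply/eqP; apply/negPn/negP => Hne.
  have Hvr' : v \in rem zeta r.
    by move: Hvr; rewrite (perm_mem (perm_to_rem Hzr)) inE (negPf Hne).
  by have := Hrest _ Hvr'; rewrite leNgt Hv.
rewrite Hfact hornerM ncM hornerXsubC ncB; apply: ler_wpM2l; first exact: nc_ge0.
have := prod_lb (ltW Hr0) Hrest.
by rewrite size_rem // Hsr.
Qed.

End Loc.

Lemma delta_exists (R : realType) (m : nat) (z : 'I_m -> R[i]) : injective z ->
  exists d : R, [/\ 0 < d, d <= 1 & forall i j, i != j -> d <= nc (z i - z j)].
Proof.
move=> zinj.
pose f (p : 'I_m * 'I_m) := Num.min 1 (nc (z p.1 - z p.2)).
have Hf : forall p, p.1 != p.2 -> 0 < f p /\ f p <= 1.
  move=> p Hp; rewrite /f; split; last by rewrite ge_min lexx.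
  rewrite lt_min ltr01 /= lt_def nc_ge0 andbT nc_eq0 subr_eq0.
  by apply: contra Hp => /eqP /zinj ->.
exists (\prod_(p | p.1 != p.2) f p); split.
- by apply: prodr_gt0 => p Hp; case: (Hf p Hp).
- by apply: prodr_ile1 => p Hp; case: (Hf p Hp) => H1 H2; rewrite H2 ltW.
move=> i j Hij; rewrite (bigD1 (i, j)) //=.
apply: le_trans (ler_piMr _ _) _.
- by case: (Hf (i, j) Hij) => H1 _; exact: ltW.
- by apply: prodr_ile1 => p /andP [Hp _]; case: (Hf p Hp) => H1 H2; rewrite H2 ltW.
by rewrite /f ge_min lexx orbT.
Qed.

Unset Implicit Arguments.

Theorem theorem3p3 (R : realType) (m : nat) (z : 'I_m -> R[i])
    (mu G : 'I_m -> R) (k : 'I_m) :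
  injective z ->
  (forall j, `|z j| = 1) ->
  (forall j, 0 < mu j) ->
  \sum_(j < m) mu j = 1 ->
  (forall i j : 'I_m, (i <= j)%N -> G j <= G i) ->
  exists r0 : R, exists T : R, exists Cst : R,
    0 < r0 /\ 0 <= T /\
    forall t : R, T <= t ->
    forall j : 'I_m, in_earlier_Kgroup G k.+1 j ->
    let P := Phi (tilted mu G t) z k.+1 in
    exists zeta : R[i],
      [/\ `|zeta - z j| < r0%:C,
          root P zeta,
          mup zeta P = 1%N,
          (forall w : R[i], `|w - z j| < r0%:C -> root P w -> w = zeta) &
          `|zeta - z j| <= (Cst * expR (t * (G k - G j)))%:C].
Proof.
move=> zinj zabs mupos musum Gmono.
have zu : forall i, nc (z i) = 1.
  by move=> i; apply: complexI; rewrite -nc_def zabs.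
have Hk : (k < m)%N := ltn_ord k.
have [d [Hd0 Hd1 Hdist]] := delta_exists zinj.
set r0 := d ^+ 4 / 256%:R.
have Hr0 : 0 < r0 by rewrite /r0 divr_gt0 // exprn_gt0.
set B := (2%:R ^+ k) ^+ 2 : R.
have HB : 0 <= B by exact: sqr_ge0.
pose Dj (j : 'I_m) := B / (mu j * nc (qk z Hk j).[z j]).
have HDj : forall j, 0 <= Dj j.
  by move=> j; rewrite /Dj divr_ge0 // mulr_ge0 ?nc_ge0 // ltW.
set D := \sum_(j : 'I_m) Dj j.
have HD : 0 <= D by apply: sumr_ge0 => j _.
have HDjD : forall j, Dj j <= D.
  by move=> j; rewrite /D (bigD1 j) //= lerDl sumr_ge0.
pose Tj (j : 'I_m) := if G k < G j then D / ((G j - G k) * r0 ^+ k.+1) else 0.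
have HTj : forall j, 0 <= Tj j.
  move=> j; rewrite /Tj; case: ifP => // HG.
  by rewrite divr_ge0 // mulr_ge0 ?exprn_ge0 ?ltW // subr_gt0.
set T := \sum_(j : 'I_m) Tj j.
have HT : 0 <= T by apply: sumr_ge0 => j _.
have HTjT : forall j, Tj j <= T.
  by move=> j; rewrite /T (bigD1 j) //= lerDl sumr_ge0.
exists r0, T, (D / r0 ^+ k); split => //; split => //.
move=> t Ht j Hj P.
move: Hj; rewrite /in_earlier_Kgroup ltnS => /andP [Hjk Hnc].
have HG : G k < G j.
  rewrite lt_def Gmono ?andbT; last exact: ltnW.
  apply: contra Hnc => /eqP HGe.
  have Hrange : forall i : 'I_m, (j <= i)%N -> (i < k.+1)%N -> G i = G k.
    move=> i Hji Hik; apply/eqP; rewrite eq_le -{1}HGe (Gmono j i Hji) Gmono //.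
  apply/forallP => i; apply/forallP => i'; apply/implyP.
  move=> /andP [/andP [/andP [Hji Hik] Hji'] Hi'k].
  by rewrite (Hrange i) // (Hrange i').
have Ht0 : 0 <= t := le_trans HT Ht.
set Z := \sum_(k0 < m) mu k0 * expR (t * G k0).
have HZ : 0 < Z.
  have Hle : mu k * expR (t * G k) <= Z.
    rewrite /Z (bigD1 k) //= lerDl; apply: sumr_ge0 => i _.
    by rewrite mulr_ge0 ?expR_ge0 // ltW.
  by apply: lt_le_trans Hle; rewrite mulr_gt0 ?expR_gt0.
have wtpos : forall i, 0 < tilted mu G t i.
  by move=> i; rewrite /tilted divr_gt0 // mulr_gt0 ?expR_gt0.
have HOP : is_monic_OP (tilted mu G t) z k.+1 P := OP_exists zinj wtpos Hk.
have Hb := phi_bound zinj wtpos zu Hk HOP Hjk.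
rewrite -/B in Hb.
set a := nc P.[z j] in Hb *.
set qj := nc (qk z Hk j).[z j] in Hb *.
have Hqj : 0 < qj.
  rewrite /qj lt_def nc_ge0 andbT nc_eq0 qk_root //.
  by rewrite eqxx andbF.
set ek := expR (t * G k).
set ej := expR (t * G j).
have Hek : 0 < ek by exact: expR_gt0.
have Hej : 0 < ej by exact: expR_gt0.
have HS : \sum_(i : 'I_m | (k <= i)%N) tilted mu G t i <= ek / Z.
  apply: (@le_trans _ _ (\sum_(i : 'I_m | (k <= i)%N) mu i * (ek / Z))).
    apply: ler_sum => i Hki; rewrite /tilted -mulrA -/Z; apply: ler_wpM2l; first exact: ltW.
    apply: ler_wpM2r; first by rewrite invr_ge0 ltW.
    rewrite /ek ler_expR; by apply: ler_wpM2l => //; apply: Gmono.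
  rewrite -mulr_suml; apply: ler_piMl; first by rewrite divr_ge0 // ltW.
  rewrite -musum [X in _ <= X]big_mkcond /= big_mkcond /=; apply: ler_sum => i _.
  by case: ifP => // _; exact: ltW.
have Ha : a <= D * expR (t * (G k - G j)).
  have HE : expR (t * (G k - G j)) = ek / ej.
    by rewrite mulrBr expRD expRN.
  apply: (@le_trans _ _ (Dj j * expR (t * (G k - G j)))); last first.
    by rewrite ler_wpM2r ?expR_ge0.
  have Hpos : 0 < tilted mu G t j * qj by rewrite mulr_gt0.
  rewrite -(ler_pM2r Hpos).
  have -> : Dj j * expR (t * (G k - G j)) * (tilted mu G t j * qj) = B * (ek / Z).
    rewrite HE /Dj /tilted -/Z -/ej.
    have := mupos j; have := Hqj; move: Hej HZ.
    move=> Hej' HZ' Hqj' Hmu; field.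
    by rewrite !gt_eqF.
  apply: le_trans (ler_wpM2l HB HS); apply: le_trans Hb.
  by rewrite [_ * a]mulrC mulrA.
have Hsmall : a < r0 ^+ k.+1.
  apply: le_lt_trans Ha _.
  set g := G j - G k.
  have Hg : 0 < g by rewrite subr_gt0.
  have -> : t * (G k - G j) = - (t * g) by rewrite /g -mulrN opprB.
  rewrite expRN.
  have HX := expR_ge1Dx (t * g).
  have HX0 : 0 < expR (t * g) := expR_gt0 _.
  rewrite ltr_pdivrMr //.
  have HTj' : Tj j <= t := le_trans (HTjT j) Ht.
  move: HTj'; rewrite /Tj HG ler_pdivrMr ?mulr_gt0 ?exprn_gt0 // => HTt.
  have Hrk : 0 < r0 ^+ k.+1 by exact: exprn_gt0.
  rewrite -/g in HTt.
  have := ler_wpM2l (ltW Hrk) HX; nra.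
have Hdj : forall i, i != j -> d <= nc (z i - z j) by move=> i Hij; exact: Hdist.
have [zeta [H1 H2 H3 H4 H5]] := root_local zinj wtpos zu HOP Hk Hd0 Hd1 Hdj Hsmall.
exists zeta; split => //.
- by rewrite nc_def ltcR.
- by move=> v; rewrite nc_def ltcR; exact: H4.
rewrite nc_def lecR mulrAC ler_pdivlMr ?exprn_gt0 //.
exact: le_trans H5 Ha.
Qed.
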